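(* Let $0<\eta<\frac1L$ and let $\{(X^k,X_0^k;Y^k,Z^k)\}_{k\ge0}$ be generated by ADAPD-OG (defined in the context). Then for all $k\ge0$, $$\mathcal L_\eta(X^{k+1},X_0^k;Y^k,Z^k)-\mathcal L_\eta(X^k,X_0^k;Y^k,Z^k)\le\frac{L\eta-1}{2\eta}\|X^{k+1}-X^k\|_F^2.$$
   Context: Notation: $\langle A,B\rangle=\sum_{i,j}a_{ij}b_{ij}$, $\|\cdot\|_F$ Frobenius norm, $e\in\mathbb R^N$ all-ones vector. Mixing matrix $W\in\mathbb R^{N\times N}$ of an undirected graph $\mathcal G=(\{1,\dots,N\},\mathcal E)$ with (i) $w_{ij}>0$ if $(i,j)\in\mathcal E$, $w_{ij}=0$ otherwise; (ii) $W=W^\top$; (iii) $\mathrm{null}(I-W)=\mathrm{span}\{e\}$; (iv) $-1<\lambda_N(W)\le\dots\le\lambda_2(W)<\lambda_1(W)=1$. $\sqrt{I-W}$ is the PSD square root of $I-W$. $f_i:\mathbb R^p\to\mathbb R$ differentiable; $F(X)=\frac1N\sum_if_i(x_i)$ for $X$ with rows $x_i^\top$, gradient $\nabla F(X)$ with rows $\frac1N\nabla f_i(x_i)^\top$; $\|\nabla F(X)-\nabla F(X')\|_F\le L\|X-X'\|_F$ for all $X,X'$, $0<L<\infty$. Augmented Lagrangian: $\mathcal L_\eta(X,X_0;Y,Z)=F(X)+\langle Y,X-X_0\rangle+\frac1{2\eta}\|X-X_0\|_F^2+\langle Z,\sqrt{I-W}X_0\rangle+\frac1{2\eta}\|\sqrt{I-W}X_0\|_F^2$.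 ADAPD-OG: fix $\eta>0$; arbitrary $X^0,X_0^0,Y^0$, $Z^0\in\mathrm{range}(\sqrt{I-W})$; for $k\ge0$: $X^{k+1}=X_0^k-\eta(\nabla F(X^k)+Y^k)$, $X_0^{k+1}=\frac12(WX_0^k+X^{k+1}+\eta(Y^k-\sqrt{I-W}Z^k))$, $Y^{k+1}=Y^k+\frac1\eta(X^{k+1}-X_0^{k+1})$, $Z^{k+1}=Z^k+\frac1\eta\sqrt{I-W}X_0^{k+1}$. *)

(* Defs.v *)
From HB Require Import structures.
From mathcomp Require Import all_boot all_order all_algebra.
From mathcomp Require Import all_classical all_reals all_analysis.
Set Implicit Arguments. Unset Strict Implicit. Unset Printing Implicit Defensive.
Import Order.TTheory GRing.Theory Num.Theory.
Local Open Scope ring_scope.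

Section Defs.
Variable R : realType.

Definition frob_inner (m n : nat) (A B : 'M[R]_(m, n)) : R :=
  \sum_(i < m) \sum_(j < n) A i j * B i j.

Definition frob_norm (m n : nat) (A : 'M[R]_(m, n)) : R :=
  Num.sqrt (frob_inner A A).

Definition ones (N : nat) : 'cV[R]_N := const_mx 1.

Definition is_psd_sqrt (N : nat) (S A : 'M[R]_N) : Prop :=
  S^T = S /\ (forall x : 'cV[R]_N, 0 <= (x^T *m S *m x) 0 0) /\ S *m S = A.

Definition mixing_matrix (N : nat) (E : rel 'I_N) (W : 'M[R]_N) : Prop :=
  (forall i j, E i j = E j i) /\
  (forall i j, (E i j -> 0 < W i j) /\ (~~ E i j -> W i j = 0)) /\
  W^T = W /\
  (forall x : 'cV[R]_N,
     (1%:M - W) *m x = 0 <-> exists c : R, x = c *: ones N) /\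
  (forall a : R, eigenvalue W a -> -1 < a /\ a <= 1) /\
  eigenvalue W 1.

Definition Fsum (N p : nat) (f : 'I_N -> 'rV[R]_p -> R) (X : 'M[R]_(N, p)) : R :=
  N%:R^-1 * \sum_(i < N) f i (row i X).

Definition gradF (N p : nat) (gf : 'I_N -> 'rV[R]_p -> 'rV[R]_p)
  (X : 'M[R]_(N, p)) : 'M[R]_(N, p) :=
  \matrix_(i < N, j < p) (N%:R^-1 * gf i (row i X) 0 j).

Definition is_gradient (p : nat) (f : 'rV[R]_p -> R) (g : 'rV[R]_p -> 'rV[R]_p) : Prop :=
  forall x, differentiable f x /\
            forall v : 'rV[R]_p, 'd f x v = \sum_(j < p) g x 0 j * v 0 j.

Definition aug_lag (N p : nat) (f : 'I_N -> 'rV[R]_p -> R) (S : 'M[R]_N) (eta : R)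
  (X X0 Y Z : 'M[R]_(N, p)) : R :=
  Fsum f X + frob_inner Y (X - X0) + (2 * eta)^-1 * frob_norm (X - X0) ^+ 2
  + frob_inner Z (S *m X0) + (2 * eta)^-1 * frob_norm (S *m X0) ^+ 2.

End Defs.

(* Main.v *)
Require Import Defs.
From HB Require Import structures.
From mathcomp Require Import all_boot all_order all_algebra.
From mathcomp Require Import all_classical all_reals all_analysis.
From mathcomp Require Import ring lra.
Import Order.TTheory GRing.Theory Num.Theory.
Local Open Scope ring_scope.

Lemma derive_line (R : realType) (p : nat) (f : 'rV[R]_p -> R) x v t :
  derive (fun s : R => f (x + s *: v)) t 1 = derive f (x + t *: v) v.
Proof.
rewrite /derive; congr (lim _). 
match goal with |- fmap ?a ?b = fmap ?c ?d => have -> : a = c end => //.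
by apply: funext => h; rewrite /shift /= scaler1 scalerDl addrCA addrA.
Qed.

Lemma derivable_line (R : realType) (p : nat) (f : 'rV[R]_p -> R) x v t :
  derivable f (x + t *: v) v -> derivable (fun s : R => f (x + s *: v)) t 1.
Proof.
rewrite /derivable.
match goal with |- cvg (fmap ?a ?b) -> cvg (fmap ?c ?d) => have -> : c = a end => //.
by apply: funext => h; rewrite /shift /= scaler1 scalerDl addrCA addrA.
Qed.

Lemma is_derive_line (R : realType) (p : nat) (f : 'rV[R]_p -> R) (g : 'rV[R]_p -> 'rV[R]_p) (x v : 'rV[R]_p) (t : R) :
  is_gradient f g ->
  is_derive t 1 (fun s : R => f (x + s *: v)) (\sum_(j < p) g (x + t *: v) 0 j * v 0 j).
Proof.
move=> hg; have [d dv] := hg (x + t *: v).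
apply: DeriveDef; first by apply: derivable_line; exact: diff_derivable.
by rewrite derive_line deriveE // dv.
Qed.

Lemma is_derive_Fsum (R : realType) (N p : nat) (f : 'I_N -> 'rV[R]_p -> R)
  (gf : 'I_N -> 'rV[R]_p -> 'rV[R]_p) (A D : 'M[R]_(N, p)) (t : R) :
  (forall i, is_gradient (f i) (gf i)) ->
  is_derive t 1 (fun s : R => Fsum f (A + s *: D)) (frob_inner (gradF gf (A + t *: D)) D).
Proof.
move=> hg.
have -> : (fun s : R => Fsum f (A + s *: D)) =
   N%:R^-1 \*: (\sum_(i < N) (fun s : R => f i (row i A + s *: row i D))).
  apply: funext => s; rewrite /Fsum fct_sumE /=; congr (_ * _).
  by apply: eq_bigr => i _; congr (f i _); apply/rowP => j; rewrite !mxE.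
apply: is_derive_eq.
  apply: is_deriveZ; apply: is_derive_sum => i; exact: is_derive_line.
rewrite /frob_inner /GRing.scale /= mulr_sumr; apply: eq_bigr => i _.
rewrite /GRing.scale /= mulr_sumr; apply: eq_bigr => j _.
rewrite !mxE mulrA; congr (_ * _ * _).
by congr (gf i _ 0 j); apply/rowP => l; rewrite !mxE.
Qed.

Section Frob.
Variable R : realType.

Lemma frob_inner_ge0 m n (A : 'M[R]_(m, n)) : 0 <= frob_inner A A.
Proof. by apply: sumr_ge0 => i _; apply: sumr_ge0 => j _; rewrite -expr2 sqr_ge0. Qed.

Lemma frob_norm_ge0 m n (A : 'M[R]_(m, n)) : 0 <= frob_norm A.
Proof. by rewrite /frob_norm; apply: sqrtr_ge0. Qed.

Lemma frob_norm_sq m n (A : 'M[R]_(m, n)) : frob_norm A ^+ 2 = frob_inner A A.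
Proof. by rewrite /frob_norm sqr_sqrtr // frob_inner_ge0. Qed.

Lemma frob_innerBl m n (A B C : 'M[R]_(m, n)) :
  frob_inner (A - B) C = frob_inner A C - frob_inner B C.
Proof.
rewrite /frob_inner -sumrB; apply: eq_bigr => i _; rewrite -sumrB.
by apply: eq_bigr => j _; rewrite !mxE mulrBl.
Qed.

Lemma frob_innerZZ m n (c : R) (A : 'M[R]_(m, n)) :
  frob_inner (c *: A) (c *: A) = c ^+ 2 * frob_inner A A.
Proof.
rewrite /frob_inner mulr_sumr; apply: eq_bigr => i _; rewrite mulr_sumr.
by apply: eq_bigr => j _; rewrite !mxE; ring.
Qed.

Lemma frob_amgm m n (G D : 'M[R]_(m, n)) (s : R) : 0 < s ->
  frob_inner G D <= (2 * s)^-1 * frob_inner G G + s / 2 * frob_inner D D.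
Proof.
move=> s0; rewrite /frob_inner !mulr_sumr -big_split; apply: ler_sum => i _.
rewrite !mulr_sumr -big_split; apply: ler_sum => j _.
rewrite -subr_ge0.
have -> : (2 * s)^-1 * (G i j * G i j) + s / 2 * (D i j * D i j) - G i j * D i j
   = (G i j - s * D i j) ^+ 2 / (2 * s).
  by field; rewrite gt_eqF.
by apply: divr_ge0; [rewrite sqr_ge0 | rewrite mulr_ge0 // ltW].
Qed.

End Frob.

Lemma descent (R : realType) (N p : nat) (f : 'I_N -> 'rV[R]_p -> R)
  (gf : 'I_N -> 'rV[R]_p -> 'rV[R]_p) (L : R) (A D : 'M[R]_(N, p)) :
  (forall i, is_gradient (f i) (gf i)) -> 0 < L ->
  (forall A B : 'M[R]_(N, p),
     frob_norm (gradF gf A - gradF gf B) <= L * frob_norm (A - B)) ->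
  Fsum f (A + D) - Fsum f A - frob_inner (gradF gf A) D <= L / 2 * frob_inner D D.
Proof.
move=> hg L0 lip.
set c0 := frob_inner (gradF gf A) D; set q := L / 2 * frob_inner D D.
pose g := fun s : R => Fsum f (A + s *: D).
pose h := g - c0 \*: (@id R) - q \*: ((@id R) * (@id R)).
have dh : forall x : R, is_derive x (1:R) (h : R -> R)
   (frob_inner (gradF gf (A + x *: D)) D - c0 *: (1:R) - q *: (x *: (1:R) + x *: (1:R))).
  move=> x; apply: is_deriveB; first apply: is_deriveB.
  exact: is_derive_Fsum.
have hc := @derivable_within_continuous R R h `[0, 1]%R (fun x _ => @ex_derive _ _ _ _ _ _ _ (dh x)).
have [c c01 hE] := MVT ltr01 (fun x _ => dh x) hc.
have h1 : h 1 = Fsum f (A + D) - c0 - q.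
  by rewrite /h /g /= !fctE /= scale1r mulr1 !scaler1.
have h0 : h 0 = Fsum f A.
  by rewrite /h /g /= !fctE /= scale0r addr0 mulr0 !scaler0 !subr0.
have hd : frob_inner (gradF gf (A + c *: D)) D - c0 - q * (c + c) <= 0.
  rewrite /c0 -frob_innerBl.
  have c0' : 0 < c by move: c01; rewrite in_itv /= => /andP[].
  have s0 : 0 < L * c by rewrite mulr_gt0.
  have H1 := @frob_amgm R _ _ (gradF gf (A + c *: D) - gradF gf A) D _ s0.
  have HG : frob_inner (gradF gf (A + c *: D) - gradF gf A) (gradF gf (A + c *: D) - gradF gf A)
     <= L ^+ 2 * c ^+ 2 * frob_inner D D.
    rewrite -frob_norm_sq -mulrA -frob_innerZZ -frob_norm_sq -exprMn.
    have Hn := lip (A + c *: D) A; rewrite addrAC subrr add0r in Hn.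
    by rewrite !expr2; apply: ler_pM; rewrite ?frob_norm_ge0.
  have p2 : 0 <= (2 * (L * c))^-1 by rewrite invr_ge0 mulr_ge0 // ltW.
  have H2 := ler_wpM2l p2 HG.
  have E : (2 * (L * c))^-1 * (L ^+ 2 * c ^+ 2 * frob_inner D D) = L * c / 2 * frob_inner D D.
    by field; rewrite !gt_eqF.
  rewrite E in H2; rewrite /q.
  lra.
rewrite !scaler1 subr0 mulr1 h1 h0 in hE.
have : Fsum f (A + D) - c0 - q - Fsum f A <= 0 by rewrite hE; exact: hd.
lra.
Qed.

Lemma key_id (R : realType) (N p : nat) (X0 Xk G Y : 'M[R]_(N, p)) (eta : R) :
  eta != 0 ->
  frob_inner Y (X0 - eta *: (G + Y) - X0) + (2 * eta)^-1 * frob_inner (X0 - eta *: (G + Y) - X0) (X0 - eta *: (G + Y) - X0)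
  - frob_inner Y (Xk - X0) - (2 * eta)^-1 * frob_inner (Xk - X0) (Xk - X0)
  + frob_inner G (X0 - eta *: (G + Y) - Xk)
  + (2 * eta)^-1 * frob_inner (X0 - eta *: (G + Y) - Xk) (X0 - eta *: (G + Y) - Xk) = 0.
Proof.
move=> e0; rewrite /frob_inner !mulr_sumr -big_split -sumrB -sumrB -big_split -big_split /=.
rewrite big1 // => i _.
rewrite !mulr_sumr -big_split -sumrB -sumrB -big_split -big_split /=.
rewrite big1 // => j _.
rewrite !mxE; field.
by rewrite e0.
Qed.

Theorem lemma10 (R : realType) (N p : nat) (E : rel 'I_N) (W S : 'M[R]_N)
  (f : 'I_N -> 'rV[R]_p -> R) (gf : 'I_N -> 'rV[R]_p -> 'rV[R]_p) (L eta : R)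
  (X X0 Y Z : nat -> 'M[R]_(N, p)) :
  mixing_matrix E W ->
  is_psd_sqrt S (1%:M - W) ->
  (forall i, is_gradient (f i) (gf i)) ->
  0 < L ->
  (forall A B : 'M[R]_(N, p),
     frob_norm (gradF gf A - gradF gf B) <= L * frob_norm (A - B)) ->
  0 < eta -> eta < L^-1 ->
  (exists M : 'M[R]_(N, p), Z 0%N = S *m M) ->
  (forall k : nat, X k.+1 = X0 k - eta *: (gradF gf (X k) + Y k)) ->
  (forall k : nat, X0 k.+1 =
     2^-1 *: (W *m X0 k + X k.+1 + eta *: (Y k - S *m Z k))) ->
  (forall k : nat, Y k.+1 = Y k + eta^-1 *: (X k.+1 - X0 k.+1)) ->
  (forall k : nat, Z k.+1 = Z k + eta^-1 *: (S *m X0 k.+1)) ->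
  forall k : nat,
    aug_lag f S eta (X k.+1) (X0 k) (Y k) (Z k)
      - aug_lag f S eta (X k) (X0 k) (Y k) (Z k)
    <= (L * eta - 1) / (2 * eta) * frob_norm (X k.+1 - X k) ^+ 2.
Proof.
move=> _ _ hg L0 lip e0 _ _ hX _ _ _ k.
have hd := @descent R N p f gf L (X k) (X k.+1 - X k) hg L0 lip.
rewrite addrCA subrr addr0 in hd.
have hk := @key_id R N p (X0 k) (X k) (gradF gf (X k)) (Y k) eta (lt0r_neq0 e0).
rewrite -(hX k) in hk.
rewrite /aug_lag !frob_norm_sq.
have -> : (L * eta - 1) / (2 * eta) * frob_inner (X k.+1 - X k) (X k.+1 - X k)
  = L / 2 * frob_inner (X k.+1 - X k) (X k.+1 - X k)
    - (2 * eta)^-1 * frob_inner (X k.+1 - X k) (X k.+1 - X k).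
  by field; rewrite lt0r_neq0.
lra.
Qed.
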